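(* Let $k\geq 3$ be an integer. Every strongly connected tournament on $2k-1$ vertices contains a subdivision of $B(k,1;1)$.
   Context: A tournament is an orientation of a complete graph. A digraph is strongly connected if every vertex can reach every other vertex by a directed path. For positive integers $k_1,k_2,k_3$, a digraph $D$ contains a subdivision of $B(k_1,k_2;k_3)$ if there exist distinct vertices $x,y$ of $D$ and three pairwise internally vertex-disjoint directed paths in $D$: two from $x$ to $y$, of lengths (numbers of arcs) at least $k_1$ and at least $k_2$ respectively, and one from $y$ to $x$ of length at least $k_3$. *)

(* Defs.v *)
From mathcomp Require Import all_boot.
Set Implicit Arguments. Unset Strict Implicit. Unset Printing Implicit Defensive.

(* A digraph on a finite vertex type T is given by its arc relation E : rel T
   (E u v means there is an arc u -> v). *)

Definition is_tournament (T : finType) (E : rel T) : Prop :=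
  (forall u, ~~ E u u) /\
  (forall u v, u != v -> (E u v || E v u)) /\
  (forall u v, E u v -> ~~ E v u).

Definition strongly_connected (T : finType) (E : rel T) : Prop :=
  forall u v : T, connect E u v.

(* q is the sequence of internal vertices of a directed path from x to y,
   i.e. x :: q ++ [:: y] is a sequence of pairwise distinct vertices with
   consecutive ones joined by arcs. Its length (number of arcs) is size q + 1. *)
Definition dipath (T : finType) (E : rel T) (x y : T) (q : seq T) : bool :=
  path E x (rcons q y) && uniq (x :: rcons q y).

(* D contains a subdivision of B(k1,k2;k3). Internal vertex disjointness is
   expressed on the sequences of internal vertices. *)
Definition contains_subdiv_B (T : finType) (E : rel T) (k1 k2 k3 : nat) : Prop :=
  exists (x y : T) (q1 q2 q3 : seq T),
    [/\ x != y, dipath E x y q1, dipath E x y q2, dipath E y x q3 &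
        [/\ [&& k1 <= (size q1).+1, k2 <= (size q2).+1 & k3 <= (size q3).+1],
             [disjoint q1 & q2], [disjoint q1 & q3] & [disjoint q2 & q3]]].

(* Main.v *)
Require Import Defs.
From mathcomp Require Import all_boot.
From mathcomp Require Import zify.

Lemma cycle_catC (T : Type) (e : rel T) (l1 l2 : seq T) :
  cycle e (l1 ++ l2) = cycle e (l2 ++ l1).
Proof. by rewrite -(rot_cycle (size l1)) rot_size_cat. Qed.

Lemma uniq_pref (T : eqType) (s1 s2 : seq T) : uniq (s1 ++ s2) -> uniq s1.
Proof. by rewrite cat_uniq => /and3P[]. Qed.

Lemma doneA (T : finType) (E : rel T) k x y P Q :
  uniq (x :: P ++ y :: Q) -> cycle E (x :: P ++ y :: Q) -> E x y ->
  k <= (size P).+1 -> Q != [::] -> contains_subdiv_B E k 1 1.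
Proof.
move=> U C Exy Hk HQ.
have U1 : uniq (x :: rcons P y).
  by apply: (@uniq_pref _ _ Q); rewrite -cats1 /= -catA.
have U' : uniq ((y :: Q) ++ (x :: P)) by rewrite uniq_catC.
have U2 : uniq (y :: rcons Q x).
  by apply: (@uniq_pref _ _ P); rewrite -cats1 /= -catA.
have Dxy : x != y by move: U1; rewrite /= mem_rcons in_cons negb_or => /andP[/andP[]].
have DPQ : [disjoint P & Q].
  rewrite disjoint_has; apply/negP=> /hasP[z zQ zP].
  move: U; rewrite /= cat_uniq /= => /and4P[_ _ /negP H _]; apply: H.
  by apply/orP; right; apply/hasP; exists z.
move: C; rewrite /= rcons_cat cat_path /= => /andP[pP].
rewrite rcons_path => /andP[Ey pQ].
exists x, y, P, [::], Q; split => //.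
- by rewrite /dipath U1 rcons_path pP Ey.
- by rewrite /dipath /= Exy /= in_cons orbF Dxy.
- by rewrite /dipath U2 rcons_path pQ.
split => //.
- by rewrite Hk.
- by rewrite disjoint_has; apply/hasPn => z; rewrite in_nil.
- by rewrite disjoint_sym disjoint_has; apply/hasPn => z; rewrite in_nil.
Qed.

Ltac permtac := apply/permP => p; rewrite -?cats1 /= ?count_cat /= ?count_cat /=; lia.

Lemma rearr (T : finType) (E : rel T) (s l1 l2 t : seq T) :
  s = l1 ++ l2 -> t = l2 ++ l1 -> uniq s -> cycle E s -> uniq t /\ cycle E t.
Proof. by move=> -> ->; rewrite uniq_catC cycle_catC. Qed.

Lemma neq_of (T : eqType) (x y : T) P Q : uniq (x :: P ++ y :: Q) -> x != y.
Proof.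
move=> /= /andP[H _]; apply/eqP => exy; move: H; rewrite exy mem_cat in_cons eqxx.
by rewrite orbT.
Qed.

Lemma permF1 (T : eqType) (a b c a2 : T) A' b1 B' :
  perm_eq [:: a, b, a2 & A' ++ c :: b1 :: B'] (c :: a :: rcons (a2 :: A' ++ b1 :: B') b).
Proof. permtac. Qed.

Lemma permF2 (T : eqType) (a b c a2 : T) A' b1 B' :
  perm_eq [:: a, b, a2 & A' ++ c :: b1 :: B'] ([:: b; c; a] ++ (a2 :: A' ++ b1 :: B')).
Proof. permtac. Qed.

Lemma fromHam (T : finType) (E : rel T) k (s : seq T) :
  3 <= k -> is_tournament E -> uniq s -> cycle E s -> size s = (2 * k - 1)%N ->
  contains_subdiv_B E k 1 1.
Proof.
move=> k3 [_ [tot _]] Us Cs Ss.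
case: s Us Cs Ss => [|a [|b t]] Us Cs Ss; try by move: Ss => /=; lia.
have St : size t = (2 * k - 3)%N.
 move: Ss => /=; lia.
have Et := cat_take_drop (k - 2) t.
have SA : size (take (k-2) t) = (k - 2)%N by rewrite size_takel //; lia.
have SD : size (drop (k-2) t) = (k - 1)%N by rewrite size_drop; lia.
move: (take (k-2) t) (drop (k-2) t) Et SA SD Us Cs => A D <- SA SD Us Cs.
case: D SD Us Cs => [|c [|b1 B']] //= SD Us Cs; try by lia.
case: A SA Us Cs => [|a2 A'] //= SA Us Cs; try by lia.
set aL := last a2 A'; set A0 := belast a2 A'.
have eqA : a2 :: A' = rcons A0 aL by exact: lastI.
set bL := last b1 B'; set B0 := belast b1 B'.
have eqB : b1 :: B' = rcons B0 bL by exact: lastI.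
have SA0 : size A0 = (k - 3)%N by rewrite size_belast; lia.
have SB0 : size B0 = (k - 3)%N by rewrite size_belast; lia.
have SB' : size B' = (k - 3)%N by clear -SD k3; lia.
have SA' : size A' = (k - 3)%N by clear -SA k3; lia.
have dif : forall u v, u != v -> E u v || E v u by [].
have [U1 C1] := @rearr _ E _ [:: a; b] (a2 :: A' ++ c :: b1 :: B')
   (a2 :: (A' ++ c :: b1 :: B') ++ a :: [:: b]) erefl ltac:(by rewrite /= -?cats1; do 4 rewrite -?catA /=) Us Cs.
have [E1|E1] : E a a2 \/ E a2 a.
  by apply/orP; rewrite orbC; apply: tot; apply: neq_of U1.
2: by apply: doneA U1 C1 E1 _ _ => //; rewrite /= ?size_cat /= ?size_cat /= ?SA' ?SB' ?SA0 ?SB0; clear -k3; lia.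
have [U2 C2] := @rearr _ E _ (a :: b :: rcons A0 aL ++ [:: c]) (b1 :: B')
   (b1 :: (B' ++ a :: b :: A0) ++ aL :: [:: c]) ltac:(by rewrite -eqA /= -?catA) ltac:(by rewrite /= -?cats1; do 4 rewrite -?catA /=) Us Cs.
have [E2|E2] : E aL b1 \/ E b1 aL.
  by apply/orP; rewrite orbC; apply: tot; apply: neq_of U2.
2: by apply: doneA U2 C2 E2 _ _ => //; rewrite /= ?size_cat /= ?size_cat /= ?SA' ?SB' ?SA0 ?SB0; clear -k3; lia.
have [U3 C3] := @rearr _ E _ [:: a] (b :: (a2 :: A') ++ c :: rcons B0 bL)
   (b :: ((a2 :: A') ++ c :: B0) ++ bL :: [:: a]) ltac:(by rewrite -eqB) ltac:(by rewrite /= -?cats1; do 4 rewrite -?catA /=) Us Cs.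
have [E3|E3] : E bL b \/ E b bL.
  by apply/orP; rewrite orbC; apply: tot; apply: neq_of U3.
2: by apply: doneA U3 C3 E3 _ _ => //; rewrite /= ?size_cat /= ?size_cat /= ?SA' ?SB' ?SA0 ?SB0; clear -k3; lia.
have [U4 C4] := @rearr _ E _ [:: a, b & a2 :: A'] (c :: b1 :: B')
   (c :: (b1 :: B' ++ [:: a]) ++ b :: (a2 :: A')) ltac:(by rewrite /= -?cats1; do 4 rewrite -?catA /=) ltac:(by rewrite /= -?cats1; do 4 rewrite -?catA /=) Us Cs.
have [E4|E4] : E b c \/ E c b.
  by apply/orP; rewrite orbC; apply: tot; apply: neq_of U4.
2: by apply: doneA U4 C4 E4 _ _ => //; rewrite /= ?size_cat /= ?size_cat /= ?SA' ?SB' ?SA0 ?SB0; clear -k3; lia.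
have [Eca|Eac] : E c a \/ E a c.
  by apply/orP; rewrite orbC; apply: tot; apply: (@neq_of _ a c (b :: a2 :: A') (b1 :: B')).
2: by apply: (@doneA _ E k a c (b :: a2 :: A') (b1 :: B')) => //; rewrite /= ?SA'; clear -k3; lia.
have P1 := @permF1 _ a b c a2 A' b1 B'.
have P2 := @permF2 _ a b c a2 A' b1 B'.
have UU : uniq (c :: a :: rcons (a2 :: A' ++ b1 :: B') b) by rewrite -(perm_uniq P1).
rewrite cons_uniq in UU; case/andP: UU => Hc UU.
have UB : uniq ([:: b; c; a] ++ (a2 :: A' ++ b1 :: B')) by rewrite -(perm_uniq P2).
have {}UB := @uniq_pref _ _ _ UB.
move: Cs; rewrite /= rcons_cat cat_path /= rcons_path => /and3P[Eab _ /and3P[pA' EaLc /and3P[_ pB' EbLa]]].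
have ab : a != b by move: UU => /andP[]; rewrite mem_rcons in_cons negb_or => /andP[].
exists a, b, (a2 :: A' ++ b1 :: B'), [::], [:: c]; split => //.
- by rewrite /dipath UU /= E1 rcons_cat cat_path pA' /= E2 rcons_path pB' E3.
- by rewrite /dipath /= Eab /= in_cons in_nil orbF ab.
- by rewrite /dipath UB /= E4 Eca.
split.
- by rewrite /= !size_cat /= SA' SB'; clear -k3; lia.
- by rewrite disjoint_has; apply/hasPn => z; rewrite in_nil.
- rewrite disjoint_sym disjoint_has /= orbF; apply: contra Hc => Hc.
  by rewrite in_cons mem_rcons in_cons Hc !orbT.
- by rewrite disjoint_has; apply/hasPn => z; rewrite in_nil.
Qed.

Lemma exitP (T : finType) (E : rel T) (P : pred T) u w :
  connect E u w -> P u -> ~~ P w -> exists x y, [/\ P x, ~~ P y & E x y].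
Proof.
case/connectP => p pp ->; elim: p u pp => [|z p IH] u /=.
  by move=> _ Pu; rewrite Pu.
case/andP=> Euz pz Pu Hl.
case Pz: (P z); first exact: (IH z pz Pz Hl).
by exists u, z; rewrite Pz.
Qed.

Lemma tour_rev (T : finType) (E : rel T) u v :
  is_tournament E -> u != v -> ~~ E u v -> E v u.
Proof. by move=> [_ [tot _]] /tot /orP[->|]. Qed.

Lemma three_cycle (T : finType) (E : rel T) :
  is_tournament E -> strongly_connected E -> 3 <= #|T| ->
  exists c, [/\ uniq c, cycle E c & size c = 3].
Proof.
move=> tE sc n3; have tE' := tE; case: tE' => [irr [tot asym]].
have : 0 < #|T| by lia.
case/card_gt0P => v _.
have : 0 < #|predC1 v| by rewrite cardC1; lia.
case/card_gt0P => u; rewrite inE /= => uv.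
have [x [y [/eqP -> yv Evy]]] := @exitP _ E (pred1 v) v u (sc v u) (eqxx v) uv.
have [x' [y' [Evx Evy' Exy]]] := @exitP _ E (E v) y v (sc y v) Evy (irr v).
have y'v : y' != v by apply: contraTneq Exy => ->; apply: asym.
have Ey'v := @tour_rev _ E v y' tE ltac:(by rewrite eq_sym) Evy'.
exists [:: v; x'; y']; split => //.
- rewrite /= !in_cons !negb_or andbT.
  have -> : v != x' by apply/negP => /eqP vx; rewrite vx (negbTE (irr x')) in Evx.
  rewrite eq_sym y'v /= ?in_nil ?andbT.
  by apply/negP => /eqP vx; rewrite vx (negbTE (irr y')) in Exy.
- by rewrite /= Evx Exy Ey'v.
Qed.

Lemma split_change (T : eqType) (f : pred T) x p :
  ~~ f x -> has f p ->
  exists L a b R, [/\ x :: p = L ++ a :: b :: R, ~~ f a & f b].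
Proof.
elim: p x => [|y p IH] x //= fx /orP[fy|hp].
  by exists [::], x, y, p.
case fy: (f y).
  by exists [::], x, y, p; rewrite fy.
have [L [a [b [R [e fa fb]]]]] := IH y (negbT fy) hp.
by exists (x :: L), a, b, R; rewrite e.
Qed.

Lemma ins_cycle (T : Type) (E : rel T) v x p :
  cycle E (x :: p) -> E (last x p) v -> E v x -> cycle E (v :: x :: p).
Proof. by rewrite /= !rcons_path => /andP[-> _] -> ->. Qed.

Ltac permtac2 := apply/permP => p; rewrite -?cats1 /= ?count_cat /= ?count_cat /=; lia.

Lemma perm_rot3 (T : eqType) (L R : seq T) a b :
  perm_eq (L ++ a :: b :: R) (b :: R ++ L ++ [:: a]).
Proof. permtac2. Qed.

Lemma perm_swap3 (T : eqType) (a x y : T) r :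
  perm_eq [:: a, x, y & r] [:: x, y, a & r].
Proof. permtac2. Qed.

Lemma extend (T : finType) (E : rel T) c :
  is_tournament E -> strongly_connected E -> uniq c -> cycle E c ->
  3 <= size c -> size c < #|T| ->
  exists c', [/\ uniq c', cycle E c' & size c' = (size c).+1].
Proof.
move=> tE sc Uc Cc c3 cT; have tE' := tE; case: tE' => [irr [tot asym]].
have [v0 v0c] : exists v0, v0 \notin c.
  case: (pickP [predC c]) => [v0 Hv|Hn]; first by exists v0.
  suff : #|T| <= size c by lia.
  rewrite -(card_uniqP Uc); apply: subset_leq_card; apply/subsetP => x _.
  by move: (Hn x); rewrite inE /= => /negbFE.
have notc_neq : forall x y, x \in c -> y \notin c -> x != y.
  by move=> x y xc yc; apply: contraNneq yc => <-.
case: (boolP [exists v, [&& v \notin c, has (fun u => E u v) c & has (E v) c]]).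
- case/existsP => v /and3P[vc /hasP[u uc Euv] /hasP[w wc Evw]].
  case: (rot_to uc) => i pp Hr.
  have fu : ~~ E v u by apply: asym.
  have hp : has (E v) pp.
    apply/hasP; exists w => //.
    have : w \in u :: pp by rewrite -Hr mem_rot.
    rewrite in_cons => /orP[/eqP wu|//].
    by move: Evw; rewrite wu (negbTE fu).
  have [L [a [b [R [e fa fb]]]]] := @split_change _ (E v) u pp fu hp.
  have Cr : cycle E (L ++ a :: b :: R) by rewrite -e -Hr rot_cycle.
  have Ur : uniq (L ++ a :: b :: R) by rewrite -e -Hr rot_uniq.
  have Mr : forall z, (z \in L ++ a :: b :: R) = (z \in c).
    by move=> z; rewrite -e -Hr mem_rot.
  have Sr : size (L ++ a :: b :: R) = size c by rewrite -e -Hr size_rot.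
  have Pm := @perm_rot3 _ L R a b.
  exists (v :: b :: R ++ L ++ [:: a]); split.
  + by rewrite cons_uniq -(perm_uniq Pm) Ur andbT -(perm_mem Pm) Mr.
  + apply: ins_cycle.
    * have : cycle E ((L ++ [:: a]) ++ b :: R) by rewrite -catA.
      by rewrite cycle_catC.
    * rewrite !last_cat /=.
      have ac : a \in c by rewrite -Mr mem_cat in_cons eqxx orbT.
      by apply: (@tour_rev _ E v a tE _ fa); rewrite eq_sym; apply: notc_neq.
    * exact: fb.
  + by rewrite (perm_size Pm) in Sr; rewrite -Sr.
- move/existsPn => H.
  have [c0 [c1 [c2 [rest Ec]]]] : exists c0 c1 c2 rest, c = [:: c0, c1, c2 & rest].
    move: c3; case: (c) => [|c0 [|c1 [|c2 rest]]] //= _.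
    by exists c0, c1, c2, rest.
  have c0c : c0 \in c by rewrite Ec inE eqxx.
  have c2c : c2 \in c by rewrite Ec !inE eqxx !orbT.
  have domd : forall x, x \notin c -> E c0 x -> forall y, y \in c -> E y x.
    move=> x xc Ec0x y yc; apply/negPn/negP => nE.
    have Exy := @tour_rev _ E y x tE (notc_neq y x yc xc) nE.
    move: (H x); rewrite xc /= => /negP; apply; apply/andP; split; apply/hasP.
      by exists c0.
    by exists y.
  have domg : forall x, x \notin c -> E x c0 -> forall y, y \in c -> E x y.
    move=> x xc Exc0 y yc; apply/negPn/negP => nE.
    have Eyx := @tour_rev _ E x y tE ltac:(by rewrite eq_sym; apply: notc_neq) nE.
    move: (H x); rewrite xc /= => /negP; apply; apply/andP; split; apply/hasP.
      by exists y.
    by exists c0.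
  have [x [y [xc Ec0x yc Eyc0 Exy]]] :
      exists x y, [/\ x \notin c, E c0 x, y \notin c, E y c0 & E x y].
    have v0c0 : c0 != v0 := notc_neq c0 v0 c0c v0c.
    case/orP: (tot c0 v0 v0c0) => [E0v|Ev0].
    + have [x [y [/andP[xc Ec0x] Py Exy]]] :=
        @exitP _ E [pred z | (z \notin c) && E c0 z] v0 c0 (sc v0 c0)
          ltac:(by rewrite /= v0c E0v) ltac:(by rewrite /= c0c).
      have yc : y \notin c.
        apply/negP => yc; move: (asym _ _ Exy).
        by rewrite (domd x xc Ec0x y yc).
      exists x, y; split => //.
      apply: (@tour_rev _ E c0 y tE (notc_neq c0 y c0c yc)).
      by move: Py; rewrite /= yc.
    + have [x [y [Px Py Exy]]] :=
        @exitP _ E [pred z | (z \in c) || ((z \notin c) && E c0 z)] c0 v0 (sc c0 v0)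
          ltac:(by rewrite /= c0c) ltac:(by rewrite /= (negbTE v0c) (negbTE (asym _ _ Ev0))).
      move: Py; rewrite /= negb_or => /andP[yc].
      rewrite yc /= => nE.
      have Eyc0 := @tour_rev _ E c0 y tE (notc_neq c0 y c0c yc) nE.
      have xc : x \notin c.
        apply/negP => xc; move: (asym _ _ Exy).
        by rewrite (domg y yc Eyc0 x xc).
      move: Px; rewrite /= (negbTE xc) /= => Ec0x.
      by exists x, y.
  have sub : subseq [:: c0, c2 & rest] c.
    by rewrite Ec; exact: (@cat_subseq _ [:: c0] _ [:: c0] _ (subseq_refl _) (subseq_cons _ _)).
  have nin : forall z, z \notin c -> z \notin [:: c0, c2 & rest].
    by move=> z; apply: contra; apply: (mem_subseq sub).
  have U2 : uniq [:: c0, c2 & rest] := subseq_uniq sub Uc.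
  exists [:: c0, x, y, c2 & rest]; split.
  + rewrite (perm_uniq (@perm_swap3 _ c0 x y (c2 :: rest))).
    rewrite cons_uniq in_cons negb_or (nin x xc) andbT.
    have -> : x != y by apply/negP => /eqP xy; rewrite xy (negbTE (irr y)) in Exy.
    by rewrite /= (nin y yc); move: U2.
  + move: Cc; rewrite Ec /= => /and3P[_ _ pr].
    by rewrite Exy Ec0x (domg y yc Eyc0 c2 c2c) pr.
  + by rewrite Ec.
Qed.

Lemma ham (T : finType) (E : rel T) :
  is_tournament E -> strongly_connected E -> 3 <= #|T| ->
  exists c, [/\ uniq c, cycle E c & size c = #|T|].
Proof.
move=> tE sc n3.
suff H : forall d, d + 3 <= #|T| -> exists c, [/\ uniq c, cycle E c & size c = d + 3].
  have := H (#|T| - 3) ltac:(lia).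
  by rewrite subnK.
elim => [|d IH] hd; first exact: three_cycle.
have [c [Uc Cc Sc]] := IH ltac:(lia).
have [c' [U' C' S']] := @extend _ E c tE sc Uc Cc ltac:(rewrite Sc; lia) ltac:(rewrite Sc; lia).
by exists c'; rewrite S' Sc addSn.
Qed.

Theorem mainTheorem6 (k : nat) (T : finType) (E : rel T) :
  3 <= k -> #|T| = (2 * k - 1)%N ->
  is_tournament E -> strongly_connected E ->
  contains_subdiv_B E k 1 1.
Proof.
move=> k3 cT tE sc.
have [c [Uc Cc Sc]] := @ham _ E tE sc ltac:(rewrite cT; lia).
by apply: (@fromHam _ E k c k3 tE Uc Cc); rewrite Sc cT.
Qed.
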